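(* Let $S$ be a left denominator set of a ring $R$ whose core $S_c$ is nonempty. Then (1) $SS_c\subseteq S_c$; and (2) for every $s\in S$ there exists $t\in S$ such that $ts\in S_c$.
   Context: All rings are associative with $1$. A multiplicative subset $S$ of $R$ ($1\in S$, $0\notin S$, closed under multiplication) is a left Ore set if $Sr\cap Rs\neq\emptyset$ for all $r\in R$, $s\in S$; for it, $\mathrm{ass}(S):=\{r\in R: sr=0\text{ for some } s\in S\}$. A left Ore set $S$ is a left denominator set if $rs=0$ ($r\in R$, $s\in S$) implies $tr=0$ for some $t\in S$. For $s\in R$, $\ker(s\cdot):=\{r\in R: sr=0\}$. The core of a left Ore set $S$ is $S_c:=\{s\in S:\ker(s\cdot)=\mathrm{ass}(S)\}$. $SS_c$ denotes $\{st: s\in S, t\in S_c\}$. *)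

(* Defs.v *)
From mathcomp Require Import all_boot all_algebra.
Set Implicit Arguments. Unset Strict Implicit. Unset Printing Implicit Defensive.
Import GRing.Theory.
Local Open Scope ring_scope.

Definition mult_subset (R : nzRingType) (S : R -> Prop) : Prop :=
  [/\ S 1, ~ S 0 & forall s t, S s -> S t -> S (s * t)].

Definition left_Ore_set (R : nzRingType) (S : R -> Prop) : Prop :=
  mult_subset S /\
  forall (r s : R), S s -> exists s' r', S s' /\ s' * r = r' * s.

Definition ass (R : nzRingType) (S : R -> Prop) (r : R) : Prop :=
  exists s, S s /\ s * r = 0.

Definition left_denominator_set (R : nzRingType) (S : R -> Prop) : Prop :=
  left_Ore_set S /\
  forall (r s : R), S s -> r * s = 0 -> exists t, S t /\ t * r = 0.

Definition ker_lmul (R : nzRingType) (s : R) (r : R) : Prop := s * r = 0.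

Definition core (R : nzRingType) (S : R -> Prop) (s : R) : Prop :=
  S s /\ forall r, ker_lmul s r <-> ass S r.

(* Main.v *)
Require Import Defs.
From mathcomp Require Import all_boot all_algebra.
Local Open Scope ring_scope.

Theorem lemma4p1 (R : nzRingType) (S : R -> Prop) :
  left_denominator_set S ->
  (exists s, core S s) ->
  (forall s t, S s -> core S t -> core S (s * t)) /\
  (forall s, S s -> exists t, S t /\ core S (t * s)).
Proof.
move=> [[[S1 S0 SM] Ore] _] [c [Sc Hc]].
have ass_l : forall a r, ass S r -> ass S (a * r).
  move=> a r [u [Su ur]].
  have [s'' [a' [Ss'' E]]] := Ore a u Su.
  exists s''; split => //.
  by rewrite GRing.mulrA E -GRing.mulrA ur GRing.mulr0.
split.
  move=> s t Ss [St Ht]; split; first exact: SM.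
  move=> r; split.
    move=> H; exists (s * t); split; first exact: SM.
    exact H.
  move=> /Ht H; rewrite /ker_lmul -GRing.mulrA.
  by rewrite /ker_lmul in H; rewrite H GRing.mulr0.
move=> s Ss; exists c; split => //; split; first exact: SM.
move=> r; split.
  move=> H; exists (c * s); split; first exact: SM.
  exact H.
move=> /(ass_l s) /Hc H; rewrite /ker_lmul -GRing.mulrA.
exact H.
Qed.
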